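(* For every chordal graph $G$, $\operatorname{box}(G)\le \omega(G)+1\le \Delta(G)+2$.
   Context: A graph is chordal if every cycle of length at least 4 has a chord (an edge joining two non-consecutive vertices of the cycle). $\omega(G)$ is the clique number (maximum size of a clique) and $\Delta(G)$ is the maximum degree. The boxicity $\operatorname{box}(G)$ is the minimum $b$ such that $G$ is the intersection graph of axis-parallel boxes in $\mathbb{R}^b$ (products of $b$ closed intervals), one box per vertex. *)

(* Defs.v *)
From HB Require Import structures.
From mathcomp Require Import all_boot all_order all_algebra.
From mathcomp Require Import reals.
Set Implicit Arguments. Unset Strict Implicit. Unset Printing Implicit Defensive.
Import Order.TTheory GRing.Theory Num.Theory.

(* A finite simple graph: vertex type T : finType, adjacency e : rel T,
   assumed symmetric and irreflexive (these are hypotheses of the theorem). *)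

Section Graphs.
Variables (T : finType) (e : rel T).

Definition is_clique (S : {set T}) : bool :=
  [forall x in S, forall y in S, (x != y) ==> e x y].

Definition clique_number : nat :=
  \max_(S : {set T} | is_clique S) #|S|.

Definition max_degree : nat :=
  \max_(v : T) #|[set u | e v u]|.

Definition is_graph_cycle (s : seq T) : bool := uniq s && cycle e s.

Definition has_chord (s : seq T) : Prop :=
  exists x y, [&& x \in s, y \in s, x != y, e x y,
                  y != next s x & x != next s y].

Definition chordal : Prop :=
  forall s : seq T, is_graph_cycle s -> 4 <= size s -> has_chord s.

(* Box representation in R^b: vertex v gets the box
   prod_{i < b} [l v i, r v i] (closed nonempty intervals), and distinct
   vertices are adjacent iff their boxes intersect. *)
Definition box_representation (R : realType) (b : nat)
    (l r : T -> 'I_b -> R) : Prop :=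
  (forall v i, l v i <= r v i)%R /\
  (forall u v, u != v ->
     (e u v <-> forall i, (l u i <= r v i)%R /\ (l v i <= r u i)%R)).

Definition has_box_dim (R : realType) (b : nat) : Prop :=
  exists l r : T -> 'I_b -> R, box_representation l r.

(* box(G) <= k : the minimum dimension b admitting a box representation is
   at most k, i.e. some b <= k admits one. *)
Definition boxicity_le (R : realType) (k : nat) : Prop :=
  exists b, b <= k /\ has_box_dim R b.

End Graphs.

(* Main.v *)
Require Import Defs.
From mathcomp Require Import all_boot all_order all_algebra.
From mathcomp Require Import reals.
From mathcomp Require Import zify ring lra.
From Stdlib Require Import Classical_Prop.
Set Implicit Arguments. Unset Strict Implicit. Unset Printing Implicit Defensive.


Lemma next_split (T : eqType) (b u : T) t1 t2 :
  uniq (b :: t1 ++ u :: t2) -> next (b :: t1 ++ u :: t2) u = head b t2.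
Proof.
move=> U; rewrite next_nth.
have -> : u \in b :: t1 ++ u :: t2 by rewrite inE mem_cat mem_head !orbT.
move: U => /= /andP[bU U2].
have ub : (b == u) = false.
  by apply/negbTE; apply: contra bU => /eqP ->; rewrite mem_cat mem_head orbT.
rewrite ub index_cat.
have -> : (u \in t1) = false.
  by move: U2; rewrite cat_uniq => /and3P[_ /hasPn H _]; apply/negbTE/H/mem_head.
rewrite /= eqxx addn0 nth_cat.
by rewrite ltnNge leqnSn subSnn /= nth0.
Qed.

Lemma next_head (T : eqType) (b : T) t : next (b :: t) b = head b t.
Proof. by rewrite next_nth mem_head /= eqxx nth0. Qed.

Lemma next_last (T : eqType) (b : T) t : uniq (b :: t) -> t != [::] ->
  next (b :: t) (last b t) = b.
Proof.
case/lastP: t => [//|t y] U _; rewrite last_rcons -cats1 next_split //.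
by rewrite cats1.
Qed.

Lemma cone (T : finType) (e : rel T) (e_sym : symmetric e) :
  chordal e ->
  forall n (b : T) (t : seq T), size t <= n -> sorted e t -> uniq (b :: t) ->
  1 < size t -> e b (head b t) -> e b (last b t) ->
  (forall z, z \in t -> e b z -> (z == head b t) || (z == last b t)) ->
  e (head b t) (last b t).
Proof.
move=> ch; elim=> [|n IH] b t.
  by rewrite leqn0 => /eqP ->.
move=> sz st U sz1 ebh ebl Hz.
have H : forall u v t1 t2, t = t1 ++ u :: t2 -> v \in t2 -> e u v ->
    v != next (b :: t) u -> e (head b t) (last b t).
  move=> u v t1 t2 Et vt2 euv vn.
  rewrite Et next_split -?Et // in vn.
  case: t2 Et vt2 vn => [//|w t3] Et; rewrite inE => /orP[/eqP -> /=|vt3];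
    first by rewrite eqxx.
  move=> _; case/splitPr: vt3 Et => t4 t5 Et.
  pose t' := t1 ++ u :: v :: t5.
  have hd : head b t' = head b t by rewrite Et /t'; by case: t1 {t' Et}.
  have ls : last b t' = last b t by rewrite Et /t' !last_cat /= last_cat.
  have sub : subseq t' t.
    rewrite Et /t'; apply: cat_subseq => //=; rewrite eqxx.
    exact: (suffix_subseq (w :: t4) (v :: t5)).
  rewrite -hd -ls; apply: IH.
  - move: sz; rewrite Et /t' !size_cat /= size_cat /=; lia.
  - move: st; rewrite Et /t' !sorted_cat_cons => /andP[-> /=].
    rewrite euv /= cat_path => /andP[_] /andP[_] /= /andP[_ ->].
    by [].
  - by apply: subseq_uniq U; rewrite /= eqxx.
  - by rewrite /t' size_cat /=; lia.
  - by rewrite hd.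
  - by rewrite ls.
  - by move=> z zt'; rewrite hd ls; apply: Hz; apply: (mem_subseq sub).
case Et2 : t sz1 => [|x [|y [|z q]]] //= _.
  by move: st; rewrite Et2 /= andbT.
have cyc : is_graph_cycle e (b :: t).
  rewrite /is_graph_cycle U /= rcons_path.
  rewrite e_sym ebl andbT.
  by move: st ebh; rewrite Et2 /= => -> ->.
have sz4 : 4 <= size (b :: t) by rewrite Et2.
have [u [v /and5P[ub vb uv euv /andP[vn un]]]] := ch _ cyc sz4.
suff: e (head b t) (last b t) by rewrite Et2.
have bt : b \notin t by move: U => /andP[].
have uvsym : forall u v, u \in b :: t -> v \in b :: t -> u != v -> e u v ->
   v != next (b :: t) u -> u != next (b :: t) v -> u != b.
  move=> u' v' ub' vb' uv' euv' vn' un'; apply/negP => /eqP E; subst u'.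
  have vt : v' \in t by move: vb'; rewrite inE eq_sym (negbTE uv').
  case/orP: (Hz _ vt euv') => /eqP E.
    by move: vn'; rewrite next_head E eqxx.
  by move: un'; rewrite E next_last ?eqxx //; case: (t) vt.
have nub : u != b by apply: (uvsym u v).
have nvb : v != b by apply: (uvsym v u) => //; [rewrite eq_sym | rewrite e_sym].
have ut : u \in t by move: ub; rewrite inE (negbTE nub).
have vt : v \in t by move: vb; rewrite inE (negbTE nvb).
have [t1 [t2 Et]] : exists t1 t2, t = t1 ++ u :: t2.
  by case/splitPr: ut => t1 t2; exists t1, t2.
rewrite Et mem_cat inE eq_sym (negbTE uv) /= in vt.
case/orP: vt => vt; last by apply: (H u v t1 t2).
have [t1a [t1b Et1]] : exists t1a t1b, t1 = t1a ++ v :: t1b.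
  by case/splitPr: vt => t1a t1b; exists t1a, t1b.
apply: (H v u t1a (t1b ++ u :: t2)); first by rewrite Et Et1 -catA.
- by rewrite mem_cat mem_head orbT.
- by rewrite e_sym.
- by [].
Qed.


Lemma cliqueP (T : finType) (e : rel T) (S : {set T}) :
  reflect (forall x y, x \in S -> y \in S -> x != y -> e x y) (is_clique e S).
Proof.
apply: (iffP idP).
  by move=> /forallP H x y xS yS xy; move: (H x); rewrite xS /= => /forallP /(_ y); rewrite yS xy.
move=> H; apply/forallP => x; apply/implyP => xS; apply/forallP => y; apply/implyP => yS.
by apply/implyP; apply: H.
Qed.

Definition simplicial (T : finType) (e : rel T) (S : {set T}) (s : T) :=
  is_clique e [set w in S | e s w].

Lemma closure_conn (T : finType) (r : rel T) (P : pred T) a y :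
  (forall x y, P x -> r x y -> P y) -> P a -> connect r a y -> P y.
Proof.
move=> cl Pa /connectP[p pp ->]; elim: p a Pa pp => //= z p IH a Pa /andP[raz pp].
exact: (IH z (cl _ _ Pa raz)).
Qed.

Lemma dirac (T : finType) (e : rel T) (e_sym : symmetric e) (e_irr : irreflexive e) :
  chordal e -> forall n (S : {set T}), #|S| <= n -> forall K, is_clique e K ->
  K \subset S -> (exists x, x \in S :\: K) -> exists2 s, s \in S :\: K & simplicial e S s.
Proof.
move=> ch; elim=> [|n IH] S.
  by rewrite leqn0 => /eqP /cards0_eq -> K _ _ [x]; rewrite inE in_set0 andbF.
move=> szS K Kc KS [x0 x0SK].
have [compl|] := boolP [forall x in S, forall y in S, (x != y) ==> e x y].
  exists x0 => //; apply/cliqueP => y z; rewrite !inE => /andP[yS _] /andP[zS _] yz.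
  by move: compl => /cliqueP; apply.
case/forallPn => a; rewrite negb_imply => /andP[aS /forallPn[b]].
rewrite negb_imply => /andP[bS]; rewrite negb_imply => /andP[ab neab].
pose X := [set w in S | e b w].
pose U := S :\: X.
pose rU := [rel x y | [&& x \in U, y \in U & e x y]].
pose A := [set w | connect rU a w].
pose S' := [set x in X | [exists w in A, e x w]].
have aU : a \in U by rewrite !inE aS e_sym (negbTE neab).
have A_U : forall w, w \in A -> w \in U.
  move=> w; rewrite inE; apply: (closure_conn (P := mem U)) => //.
  by move=> x y _ /and3P[].
have US : forall w, w \in U -> w \in S by move=> w; rewrite !inE => /andP[].
have bA : b \notin A.
  apply/negP; rewrite inE => cab.
  have := closure_conn (P := fun w => (w \in U) && (w != b)) _ _ cab.
  rewrite aU ab eqxx andbF => H; suff: false by []; apply: H => //.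
  move=> x y _ /and3P[xU -> exy] /=; apply/negP => /eqP yb; subst y.
  by move: xU; rewrite !inE e_sym exy; case: (x \in S).
have aA : a \in A by rewrite inE connect0.
have nbrA : forall w z, w \in A -> z \in S -> e w z -> (z \in A) || (z \in S').
  move=> w z wA zS ewz; case zX : (z \in X).
    by apply/orP; right; rewrite inE zX; apply/existsP; exists w; rewrite wA e_sym.
  apply/orP; left; move: wA; rewrite !inE => wA.
  apply: (connect_trans wA); apply: connect1; rewrite /= ewz andbT.
  rewrite (A_U w) ?inE ?wA //.
  by move: zX; rewrite inE zS /= => ->.
have symU : symmetric rU.
  by move=> x y; rewrite /= e_sym; case: (x \in U); case: (y \in U).
have S'X : forall x, x \in S' -> x \in X by move=> x; rewrite inE => /andP[].
have XU : forall x, x \in X -> x \notin U by move=> x xX; rewrite inE xX.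
have S'c : is_clique e S'.
  apply/cliqueP => x y xS' yS' xy; apply/negPn/negP => nexy.
  move: (xS') (yS'); rewrite !inE => /andP[/andP[xS ebx] /existsP[wx /andP[wxA exw]]].
  move=> /andP[/andP[yS eby] /existsP[wy /andP[wyA eyw]]].
  have cw : connect rU wx wy.
    move: wxA wyA; rewrite !inE => c1 c2.
    by apply: connect_trans c2; rewrite (sym_connect_sym symU).
  case/connectP: cw => p pp Ewy.
  have pA : forall z, z \in wx :: p -> z \in A.
    move=> z /(path_connect pp) cz; rewrite inE.
    by apply: connect_trans cz; move: wxA; rewrite inE.
  have pe : path e x (wx :: rcons p y).
    rewrite /= exw rcons_path -Ewy e_sym eyw andbT /=.
    by apply: sub_path pp => u v /and3P[].
  have Ly0 : last x (wx :: rcons p y) = y by rewrite /= last_rcons.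
  move: Ly0; case: (shortenP pe) => p' pe' up' sub' Ly.
  have bnA : forall z, z \in A -> ~~ e b z.
    move=> z /A_U zU; apply/negP => ebz; move: zU; rewrite !inE ebz andbT.
    by case: (z \in S).
  have neb : forall z, e b z -> z != b.
    by move=> z ebz; apply/negP => /eqP E; move: ebz; rewrite E e_irr.
  have sub2 : forall z, z \in p' -> (z == y) || (z \in A).
    move=> z /sub'; rewrite inE -cats1 mem_cat inE orbA => /orP[|->//].
    by move=> H; rewrite pA ?orbT // inE.
  have p'n : p' != [::] by apply/negP => /eqP E; move: Ly xy; rewrite E /= => ->; rewrite eqxx.
  have := cone e_sym ch (leqnn (size (x :: p'))) (b := b).
  rewrite /= Ly pe' ebx eby => H; move/negP: nexy; apply; apply: H => //.
  - move: up' => /= /andP[-> ->]; rewrite !andbT inE negb_or eq_sym (neb _ ebx) /=.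
    apply/negP => bp.
    by move: (sub2 _ bp); rewrite (negbTE (bA)) orbF eq_sym (negbTE (neb _ eby)).
  - by case: (p') p'n.
  - move=> z; rewrite inE => /orP[->//|zp].
    by case/orP: (sub2 _ zp) => [->|/bnA /negbTE ->]; rewrite ?orbT.
have S'S : forall x, x \in S' -> x \in S by move=> x /S'X; rewrite inE => /andP[].
have S'A : forall x, x \in S' -> x \notin A.
  by move=> x xS'; apply/negP => /A_U; apply/negP/XU/S'X.
pose S1 := A :|: S'.
have S1S : S1 \subset S.
  by apply/subsetP => z; rewrite inE => /orP[/A_U/US|/S'S].
have bS1 : b \notin S1.
  by rewrite inE negb_or bA /=; apply/negP => /S'X; rewrite inE e_irr andbF.
have [s1 s1in s1s] : exists2 s, s \in S1 :\: S' & simplicial e S1 s.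
  apply: IH S'c _ _.
  - have : #|S1| < #|S| by apply: proper_card; apply/properP; split => //; exists b.
    by move=> H; rewrite -ltnS; apply: leq_trans H szS.
  - by apply/subsetP => z zS'; rewrite inE zS' orbT.
  - by exists a; rewrite in_setD in_setU aA /= andbT; apply/negP => /S'A; rewrite aA.
have s1A : s1 \in A by move: s1in; rewrite !inE => /andP[/negbTE ->]; rewrite orbF.
have s1s' : simplicial e S s1.
  rewrite /simplicial; suff -> : [set w in S | e s1 w] = [set w in S1 | e s1 w] by [].
  apply/setP => w; rewrite inE [RHS]inE; case esw: (e s1 w); rewrite ?andbF ?andbT //.
  apply/idP/idP => [wS|/(subsetP S1S)//].
  by have := nbrA s1 w s1A wS esw; rewrite in_setU.
pose S2 := S :\: A.
have [s2 s2in s2s] : exists2 s, s \in S2 :\: S' & simplicial e S2 s.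
  apply: IH S'c _ _.
  - have : #|S2| < #|S|.
      apply: proper_card; apply/properP; split; first by apply/subsetP => z; rewrite inE => /andP[].
      by exists a; rewrite // in_setD aA.
    by move=> H; rewrite -ltnS; apply: leq_trans H szS.
  - by apply/subsetP => z zS'; rewrite inE S'S // S'A.
  - exists b; rewrite !in_setD bA bS /= andbT; apply/negP => /S'X.
    by rewrite inE e_irr andbF.
have s2nA : s2 \notin A by move: s2in; rewrite !in_setD => /andP[_ /andP[]].
have s2nS' : s2 \notin S' by move: s2in; rewrite !in_setD => /andP[].
have s2S : s2 \in S by move: s2in; rewrite !in_setD => /andP[_ /andP[]].
have s2s' : simplicial e S s2.
  rewrite /simplicial; suff -> : [set w in S | e s2 w] = [set w in S2 | e s2 w] by [].
  apply/setP => w; rewrite inE [RHS]inE; case esw: (e s2 w); rewrite ?andbF ?andbT //.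
  rewrite in_setD; case wA: (w \in A); rewrite ?andbT //=.
  have := nbrA w s2 wA s2S; rewrite e_sym esw (negbTE s2nA) (negbTE s2nS') => /(_ isT).
  by [].
have ne12 : ~~ e s1 s2.
  apply/negP => e12; have := nbrA s1 s2 s1A s2S e12.
  by rewrite (negbTE s2nA) (negbTE s2nS').
have s1S : s1 \in S by apply: (subsetP S1S); rewrite in_setU s1A.
case s1K : (s1 \in K).
  case s2K : (s2 \in K).
    have s12 : s1 != s2 by apply/negP => /eqP E; move: s2nA; rewrite -E s1A.
    by move/cliqueP: Kc => /(_ s1 s2 s1K s2K s12) e12; move: ne12; rewrite e12.
  by exists s2 => //; rewrite inE s2K.
by exists s1 => //; rewrite inE s1K.
Qed.


Lemma clique_sub (T : finType) (e : rel T) (A B : {set T}) :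
  A \subset B -> is_clique e B -> is_clique e A.
Proof.
move=> /subsetP AB /cliqueP cB; apply/cliqueP => x y xA yA; apply: cB; exact: AB.
Qed.

Definition earlier (T : finType) (e : rel T) (ord : T -> nat) (v : T) :=
  [set w | e v w & ord w < ord v].

Lemma peo_ex (T : finType) (e : rel T) (e_sym : symmetric e) (e_irr : irreflexive e) :
  chordal e -> exists ord : T -> nat, injective ord /\
    forall v, is_clique e (earlier e ord v).
Proof.
move=> ch.
suff H : forall n (S : {set T}), #|S| <= n -> exists ord : T -> nat, injective ord /\
    forall v, v \in S -> is_clique e [set w in S | e v w & ord w < ord v].
  have [ord [inj cl]] := H _ [set: T] (leqnn _); exists ord; split => // v.
  by apply: clique_sub (cl v (in_setT v)); apply/subsetP => w; rewrite !inE.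
elim=> [|n IH] S szS.
  exists (fun v => val (enum_rank v)); split.
    by move=> x y /val_inj /enum_rank_inj.
  by move=> v; move: szS; rewrite leqn0 => /eqP /cards0_eq ->; rewrite inE.
case: (set_0Vmem S) => [->|[x xS]].
  exists (fun v => val (enum_rank v)); split.
    by move=> x y /val_inj /enum_rank_inj.
  by move=> v; rewrite inE.
have c0 : is_clique e (set0 : {set T}) by apply/cliqueP => ? ?; rewrite inE.
have s0 : (set0 : {set T}) \subset S by apply/subsetP => ?; rewrite inE.
have x0 : exists x, x \in S :\: set0 by exists x; rewrite inE in_set0.
have [s sS ssimp] := dirac e_sym e_irr ch (leqnn #|S|) c0 s0 x0.
have sS' : s \in S by move: sS; rewrite inE => /andP[].
have szS' : #|S :\ s| <= n by move: szS; rewrite (cardsD1 s S) sS' add1n ltnS.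
have [ord' [inj' cl']] := IH (S :\ s) szS'.
pose M := \max_w ord' w.
have leM : forall w, ord' w <= M by move=> w; apply: (leq_bigmax w).
exists (fun v => if v == s then M.+1 else ord' v); split.
  move=> x1 y1 /=; case: eqP => [->|xs]; case: eqP => [->|ys] //.
  - by move=> E; have := leM y1; rewrite -E ltnn.
  - by move=> E; have := leM x1; rewrite E ltnn.
  - exact: inj'.
move=> v vS; case: (eqVneq v s) => [->|vs].
  apply: clique_sub ssimp; apply/subsetP => w; rewrite !inE => /andP[-> /andP[-> _]].
  by [].
apply: clique_sub (cl' v _); last by rewrite !inE vs.
apply/subsetP => w; rewrite !inE.
case: eqP => [->|ws]; last by move=> /andP[-> /andP[-> ->]].
by move=> /andP[_ /andP[_]]; rewrite ltnNge ltnW // ltnS leM.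
Qed.

Lemma clique_le (T : finType) (e : rel T) (S : {set T}) :
  is_clique e S -> #|S| <= clique_number e.
Proof. by move=> cS; exact: (@leq_bigmax_cond _ (fun S => is_clique e S) (fun S => #|S|) S cS). Qed.

Lemma coloring (T : finType) (e : rel T) (e_sym : symmetric e) (e_irr : irreflexive e)
  (ord : T -> nat) (inj : injective ord) (cl : forall v, is_clique e (earlier e ord v)) :
  exists c : T -> nat, (forall v, c v < clique_number e) /\
    (forall u v, e u v -> c u != c v).
Proof.
suff H : forall k, exists c : T -> nat, (forall v, ord v < k -> c v < clique_number e) /\
    (forall u v, ord u < k -> ord v < k -> e u v -> c u != c v).
  have [c [H1 H2]] := H (\max_v ord v).+1.
  have lt : forall v, ord v < (\max_v ord v).+1 by move=> v; rewrite ltnS (leq_bigmax v).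
  by exists c; split => [v|u v]; [apply: H1 | apply: H2].
elim=> [|k [c [Hb Hp]]]; first by exists (fun _ => 0).
case: (pickP (fun s => ord s == k)) => [s /eqP sk|none]; last first.
  have lt : forall v, ord v < k.+1 -> ord v < k.
    by move=> v; rewrite ltnS leq_eqVlt none.
  by exists c; split => [v /lt|u v /lt uk /lt vk]; [apply: Hb | apply: Hp].
pose K := earlier e ord s.
pose sq := [seq c w | w <- enum K].
have sK : s \notin K by rewrite inE e_irr.
have cardK : #|K| < clique_number e.
  have : #|s |: K| <= clique_number e.
    apply: clique_le; apply/cliqueP => x y; rewrite !inE.
    case/orP => [/eqP ->|xK]; case/orP => [/eqP ->|yK]; rewrite ?eqxx //.
    - by move=> _; move: yK => /andP[].
    - by move=> _; move: xK; rewrite e_sym => /andP[].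
    - by move/cliqueP: (cl s); apply; rewrite inE.
  by rewrite cardsU1 sK.
have [j jlt jn] : exists2 j, j < clique_number e & j \notin sq.
  case: (boolP (all (fun j => j \in sq) (iota 0 (clique_number e)))) => [/allP H|].
    have : size (iota 0 (clique_number e)) <= size sq.
      by apply: uniq_leq_size; first exact: iota_uniq.
    rewrite size_iota size_map -cardE => H2; move: cardK; rewrite ltnNge H2.
    by [].
  by case/allPn => j; rewrite mem_iota /= => jl jn; exists j.
pose c' := fun v => if v == s then j else c v.
exists c'; split.
  move=> v; rewrite /c'; case: eqP => [//|vs] vk; apply: Hb.
  move: vk; rewrite ltnS leq_eqVlt => /orP[/eqP E|//].
  by case: vs; apply: inj; rewrite E sk.
have lts : forall v, ord v < k.+1 -> v != s -> ord v < k.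
  move=> v; rewrite ltnS leq_eqVlt => /orP[/eqP E|//] /eqP vs.
  by case: vs; apply: inj; rewrite E sk.
have inK : forall v, ord v < k.+1 -> v != s -> e s v -> c v \in sq.
  move=> v vk vs esv; apply: map_f; rewrite mem_enum inE esv sk /=.
  exact: lts.
move=> u v uk vk euv; rewrite /c'.
case: (eqVneq u s) => [us|us]; case: (eqVneq v s) => [vs|vs].
- by move: euv; rewrite us vs e_irr.
- subst u; apply/eqP => E; move: jn; rewrite E inK //.
- by subst v; apply/eqP => E; move: jn; rewrite -E inK // e_sym.
- by apply: Hp => //; apply: lts.
Qed.


Definition anc (T : Type) (pf : T -> T) (u v : T) := exists k, iter k pf v = u.

Lemma anc_refl (T : Type) (pf : T -> T) u : anc pf u u.
Proof. by exists 0. Qed.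

Lemma anc_step (T : Type) (pf : T -> T) w s : anc pf w s -> w = s \/ anc pf w (pf s).
Proof. by case=> [[|k]] /= E; [left|right; exists k; rewrite -iterSr]. Qed.

Lemma anc_pf (T : Type) (pf : T -> T) w s : anc pf w (pf s) -> anc pf w s.
Proof. by case=> k E; exists k.+1; rewrite iterSr. Qed.

Lemma anc_trans (T : Type) (pf : T -> T) a b c : anc pf a b -> anc pf b c -> anc pf a c.
Proof. by case=> m <- [n <-]; exists (m + n); rewrite iterD. Qed.

Lemma anc_total (T : Type) (pf : T -> T) a b v :
  anc pf a v -> anc pf b v -> anc pf a b \/ anc pf b a.
Proof.
case=> m <- [n <-]; case: (leqP m n) => mn.
  by right; exists (n - m); rewrite -iterD subnK.
by left; exists (m - n); rewrite -iterD subnK // ltnW.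
Qed.

Lemma anc_ord (T : Type) (pf : T -> T) (ord : T -> nat)
  (pf_le : forall v, ord (pf v) <= ord v) u v : anc pf u v -> ord u <= ord v.
Proof.
case=> k <-; elim: k => //= k IH; exact: leq_trans (pf_le _) IH.
Qed.

Lemma forest_intervals (T : finType) (pf : T -> T) (ord : T -> nat) (inj : injective ord)
  (pf_lt : forall v, pf v != v -> ord (pf v) < ord v) :
  exists l r : T -> nat, (forall v, l v <= r v) /\
    (forall u v, anc pf u v -> l u <= l v /\ r v <= r u) /\
    (forall u v, ~ anc pf u v -> ~ anc pf v u -> r u < l v \/ r v < l u).
Proof.
have pf_le : forall v, ord (pf v) <= ord v.
  by move=> v; case: (eqVneq (pf v) v) => [->//|/pf_lt/ltnW].
have ancO := anc_ord pf_le.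
have ancS : forall u v, anc pf u v -> u != v -> ord u < ord v.
  move=> u v /ancO; rewrite leq_eqVlt => /orP[/eqP E|//] uv.
  by move: uv; rewrite (inj _ _ E) eqxx.
suff H : forall k, exists l r : T -> nat,
  (forall v, ord v < k -> l v <= r v) /\
  (forall u v, ord u < k -> ord v < k -> anc pf u v -> l u <= l v /\ r v <= r u) /\
  (forall u v, ord u < k -> ord v < k -> anc pf u v -> u != v -> l u < l v) /\
  (forall u v, ord u < k -> ord v < k -> ~ anc pf u v -> ~ anc pf v u ->
      r u < l v \/ r v < l u).
  have [l [r [H1 [H2 [_ H4]]]]] := H (\max_v ord v).+1.
  have lt : forall v, ord v < (\max_v ord v).+1 by move=> v; rewrite ltnS (leq_bigmax v).
  exists l, r; split; first by move=> v; apply: H1.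
  by split=> u v; [apply: H2 | apply: H4].
elim=> [|k [l [r [H1 [H2 [H3 H4]]]]]].
  by exists (fun _ => 0), (fun _ => 0).
case: (pickP (fun s => ord s == k)) => [s /eqP sk|none]; last first.
  have lt : forall v, ord v < k.+1 -> ord v < k.
    by move=> v; rewrite ltnS leq_eqVlt none.
  exists l, r; split; first by move=> v vk; apply: H1 (lt _ vk).
  split; first by move=> u v uk vk; apply: H2 (lt _ uk) (lt _ vk).
  split; first by move=> u v uk vk; apply: H3 (lt _ uk) (lt _ vk).
  by move=> u v uk vk; apply: H4 (lt _ uk) (lt _ vk).
have lts : forall v, ord v < k.+1 -> v != s -> ord v < k.
  move=> v; rewrite ltnS leq_eqVlt => /orP[/eqP E|//] /eqP vs.
  by case: vs; apply: inj; rewrite E sk.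
pose M := \max_w r w.
have leM : forall w, r w <= M by move=> w; apply: (leq_bigmax w).
pose ls := if pf s == s then 3 * M + 3 else 3 * l (pf s) + 1.
pose l' := fun v => if v == s then ls else 3 * l v.
pose r' := fun v => if v == s then ls else 3 * r v + 2.
have nsanc : forall v, ord v < k -> ~ anc pf s v.
  by move=> v vk /ancO; rewrite sk leqNgt vk.
have ancs : forall u, ord u < k -> anc pf u s -> pf s != s /\ anc pf u (pf s).
  move=> u uk a0; case: (anc_step a0) => [us|a]; first by move: uk; rewrite us sk ltnn.
  case: (eqVneq (pf s) s) => [E|]; last by [].
  have fx : forall j, iter j pf s = s by elim=> //= j ->; rewrite E.
  by case: a0 => j; rewrite fx => us; move: uk; rewrite -us sk ltnn.
have pk : pf s != s -> ord (pf s) < k by move=> /pf_lt; rewrite sk.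
have new1 : forall u, ord u < k -> anc pf u s -> l' u <= l' s /\ r' s <= r' u /\ l' u < l' s.
  move=> u uk us; have us' : u != s by apply/eqP => E; move: uk; rewrite E sk ltnn.
  have [ps a] := ancs u uk us.
  rewrite /l' /r' eqxx (negbTE us') /ls (negbTE ps).
  have [A1 A2] := H2 _ _ uk (pk ps) a.
  have := H1 _ (pk ps); lia.
have new2 : forall u, ord u < k -> ~ anc pf u s -> r' u < l' s \/ r' s < l' u.
  move=> u uk nus; have us' : u != s by apply/eqP => E; apply: nus; rewrite E; exists 0.
  rewrite /l' /r' eqxx (negbTE us') /ls.
  case: (eqVneq (pf s) s) => [_|ps].
    by left; have := leM u; lia.
  have nup : ~ anc pf u (pf s) by move=> a; apply: nus; apply: anc_pf.
  case: (classic (anc pf (pf s) u)) => [apu|napu].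
    case: (eqVneq (pf s) u) => [E|psu]; first by case: nup; rewrite E; exists 0.
    by have := H3 _ _ (pk ps) uk apu psu; lia.
  have := H4 _ _ uk (pk ps) nup napu.
  have := H1 _ (pk ps); lia.
have oldl : forall v, v != s -> l' v = 3 * l v by move=> v vs; rewrite /l' (negbTE vs).
have oldr : forall v, v != s -> r' v = 3 * r v + 2 by move=> v vs; rewrite /r' (negbTE vs).
exists l', r'; split.
  move=> v vk; case: (eqVneq v s) => [->|vs]; first by rewrite /l' /r' eqxx.
  by rewrite oldl // oldr //; have := H1 _ (lts _ vk vs); lia.
split.
  move=> u v uk vk a; case: (eqVneq u s) => [us|us]; case: (eqVneq v s) => [vs|vs].
  - by rewrite us vs.
  - by case: (nsanc v (lts _ vk vs)); rewrite -us.
  - by subst v; have [? [? ?]] := new1 u (lts _ uk us) a.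
  - rewrite !oldl // !oldr //; have := H2 _ _ (lts _ uk us) (lts _ vk vs) a; lia.
split.
  move=> u v uk vk a uv; case: (eqVneq u s) => [us|us]; case: (eqVneq v s) => [vs|vs].
  - by move: uv; rewrite us vs eqxx.
  - by case: (nsanc v (lts _ vk vs)); rewrite -us.
  - by subst v; have [? [? ?]] := new1 u (lts _ uk us) a.
  - rewrite !oldl //; have := H3 _ _ (lts _ uk us) (lts _ vk vs) a uv; lia.
move=> u v uk vk nuv nvu; case: (eqVneq u s) => [us|us]; case: (eqVneq v s) => [vs|vs].
- by case: nuv; rewrite us vs; exists 0.
- subst u; case: (new2 v (lts _ vk vs) nvu) => ?; [right|left] => //.
- by subst v; apply: new2 (lts _ uk us) _.
- rewrite !oldl // !oldr //; have := H4 _ _ (lts _ uk us) (lts _ vk vs) nuv nvu; lia.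
Qed.


Definition pfe (T : finType) (e : rel T) (ord : T -> nat) (v : T) : T :=
  if [pick w | [&& e v w, ord w < ord v &
        [forall w', (e v w' && (ord w' < ord v)) ==> (ord w' <= ord w)]]] is Some w
  then w else v.

Lemma pfe_spec (T : finType) (e : rel T) (ord : T -> nat) v :
  (pfe e ord v = v /\ forall w, e v w -> ord w < ord v -> False) \/
  [/\ pfe e ord v != v, e v (pfe e ord v), ord (pfe e ord v) < ord v &
      forall w, e v w -> ord w < ord v -> ord w <= ord (pfe e ord v)].
Proof.
rewrite /pfe; case: pickP => [w /and3P[evw wlt /forallP mx] | none].
  right; split => //.
    by apply/eqP => E; move: wlt; rewrite E ltnn.
  by move=> w' ew' lt'; have := mx w'; rewrite ew' lt'.
left; split => // w evw wlt.
have Pw : (fun i => e v i && (ord i < ord v)) w by rewrite /= evw wlt.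
case: (@arg_maxnP _ w (fun i => e v i && (ord i < ord v)) ord Pw) => m /andP[evm mlt] mx.
have := none m; rewrite /= evm mlt /=.
suff -> : [forall w', e v w' && (ord w' < ord v) ==> (ord w' <= ord m)] by [].
by apply/forallP => w'; apply/implyP => /mx.
Qed.

Lemma pfe_le (T : finType) (e : rel T) (ord : T -> nat) v : ord (pfe e ord v) <= ord v.
Proof. by case: (pfe_spec e ord v) => [[-> _]|[_ _ /ltnW]]. Qed.

Lemma pfe_lt (T : finType) (e : rel T) (ord : T -> nat) v :
  pfe e ord v != v -> ord (pfe e ord v) < ord v.
Proof. by case: (pfe_spec e ord v) => [[-> _]|[_ _ ->]]; rewrite ?eqxx. Qed.

Lemma P1 (T : finType) (e : rel T) (e_sym : symmetric e) (ord : T -> nat) (inj : injective ord)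
  (cl : forall v, is_clique e (earlier e ord v)) :
  forall u v, e u v -> ord u < ord v -> anc (pfe e ord) u v.
Proof.
suff H : forall n v, ord v < n -> forall u, e u v -> ord u < ord v -> anc (pfe e ord) u v.
  by move=> u v; apply: (H (ord v).+1).
elim=> [//|n IH] v vn u euv uv.
case: (pfe_spec e ord v) => [[_ /(_ u)]|[pv evp pvlt pmax]].
  by rewrite e_sym => /(_ euv uv).
apply: anc_pf.
case: (eqVneq u (pfe e ord v)) => [<-|up]; first exact: anc_refl.
have evu : e v u by rewrite e_sym.
have le := pmax u evu uv.
have lt : ord u < ord (pfe e ord v).
  by rewrite ltn_neqAle le andbT; apply/eqP => /inj E; move: up; rewrite E eqxx.
apply: IH => //; first by move: vn; rewrite ltnS; apply: leq_trans.
move/cliqueP: (cl v); apply => //; rewrite inE ?evu ?uv ?evp ?pvlt //.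
Qed.

Lemma P2 (T : finType) (e : rel T) (e_sym : symmetric e) (ord : T -> nat) (inj : injective ord)
  (cl : forall v, is_clique e (earlier e ord v)) :
  forall u v w, e u v -> anc (pfe e ord) u w -> anc (pfe e ord) w v -> u != w -> e u w.
Proof.
move=> u v w euv auw [k Ek]; subst w; elim: k auw => [//|k IH] /= auw uw.
set w' := iter k (pfe e ord) v in IH auw uw *.
have auw' : anc (pfe e ord) u w' by apply: anc_pf.
have ancO := anc_ord (pfe_le e ord).
have uw' : u != w'.
  apply/eqP => E; move: auw; rewrite E => /ancO le.
  have E2 : pfe e ord w' = w'.
    by apply: inj; apply/eqP; rewrite eqn_leq le pfe_le.
  by move: uw; rewrite E E2 eqxx.
have euw' := IH auw' uw'.
have lt : ord u < ord w'.
  rewrite ltn_neqAle (ancO _ _ auw') andbT.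
  by apply/eqP => /inj E; move: uw'; rewrite E eqxx.
case: (pfe_spec e ord w') => [[_ /(_ u)]|[pv evp pvlt pmax]].
  by rewrite e_sym => /(_ euw' lt).
move/cliqueP: (cl w'); apply => //; rewrite inE ?pvlt ?evp ?lt //.
by rewrite e_sym euw'.
Qed.


Import Order.TTheory GRing.Theory Num.Theory.
Lemma omega_le (T : finType) (e : rel T) (e_sym : symmetric e) :
  clique_number e <= (max_degree e).+1.
Proof.
apply/bigmax_leqP => S /cliqueP cS.
case: (set_0Vmem S) => [->|[x xS]]; first by rewrite cards0.
rewrite (cardsD1 x S) xS add1n ltnS.
apply: leq_trans (leq_bigmax x).
apply: subset_leq_card; apply/subsetP => y; rewrite !inE => /andP[yx yS].
by apply: cS => //; rewrite eq_sym.
Qed.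

Unset Implicit Arguments.
Import Order.TTheory GRing.Theory Num.Theory.
Theorem theorem5 (R : realType) (T : finType) (e : rel T)
    (e_sym : symmetric e) (e_irr : irreflexive e) :
  chordal e ->
  boxicity_le e R (clique_number e).+1 /\
  (clique_number e).+1 <= (max_degree e).+2.
Proof.
move=> ch; split; last by rewrite ltnS; apply: omega_le.
have [ord [inj cl]] := peo_ex e_sym e_irr ch.
have [c [cb cp]] := coloring e_sym e_irr inj cl.
pose pf := pfe e ord.
have [l0 [r0 [F1 [F2 F4]]]] := forest_intervals inj (@pfe_lt _ e ord).
pose N := \max_w ord w.
have leN : forall w, ord w <= N by move=> w; apply: (leq_bigmax w).
pose om := clique_number e.
pose L (v : T) (i : nat) : nat := if i == 0 then l0 v else if c v == i.-1 then ord v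
  else if [pick u0 | [&& e v u0, ord u0 < ord v & c u0 == i.-1]] is Some u0 then ord u0
  else ord v.
pose Rr (v : T) (i : nat) : nat := if i == 0 then r0 v else if c v == i.-1 then ord v else N.
have Lle : forall u i, i != 0 -> L u i <= ord u.
  move=> u i i0; rewrite /L (negbTE i0); case: ifP => // _.
  by case: pickP => // u0 /and3P[_ /ltnW ->].
have ancO := anc_ord (pfe_le e ord).
have ancS : forall u v, anc pf u v -> u != v -> ord u < ord v.
  move=> u v /ancO le uv; rewrite ltn_neqAle le andbT.
  by apply/eqP => /inj E; move: uv; rewrite E eqxx.
have ordne : forall u v, u != v -> ord u != ord v.
  by move=> u v uv; apply/eqP => /inj E; move: uv; rewrite E eqxx.
have side : forall u v i, e u v -> L u i <= Rr v i.
  move=> u v i euv.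
  have uv : u != v by apply/eqP => E; move: euv; rewrite E e_irr.
  case: (eqVneq i 0) => [->|i0].
    rewrite /L /Rr /=.
    case: (ltngtP (ord u) (ord v)) => [lt|lt|/eqP]; last by rewrite (negbTE (ordne _ _ uv)).
      have [A1 A2] := F2 _ _ (P1 e_sym inj cl euv lt).
      by apply: leq_trans A1 (F1 v).
    have evu : e v u by rewrite e_sym.
    have [A1 A2] := F2 _ _ (P1 e_sym inj cl evu lt).
    by apply: leq_trans (F1 u) A2.
  have [cvk|cvk] := eqVneq (c v) i.-1; last first.
    by rewrite /Rr (negbTE i0) (negbTE cvk); apply: leq_trans (Lle _ _ i0) (leN u).
  rewrite /Rr (negbTE i0) cvk eqxx.
  case: (ltngtP (ord u) (ord v)) => [lt|lt|/eqP]; last by rewrite (negbTE (ordne _ _ uv)).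
    exact: leq_trans (Lle _ _ i0) (ltnW lt).
  have cuk : (c u == i.-1) = false by apply/negbTE; rewrite -cvk; apply: cp.
  rewrite /L (negbTE i0) cuk.
  case: pickP => [u0 /and3P[euu0 u0lt cu0]|none]; last first.
    by have := none v; rewrite euv lt cvk eqxx.
  case: (eqVneq u0 v) => [->//|u0v].
  have : e u0 v.
    move/cliqueP: (cl u); apply => //; rewrite inE ?euu0 ?u0lt ?euv ?lt //.
  by move/cp; rewrite (eqP cu0) cvk eqxx.
have sep : forall u v, ~~ e u v -> ord u < ord v ->
    exists2 i, i < om.+1 & (Rr u i < L v i) || (Rr v i < L u i).
  move=> u v neuv lt.
  have uv : u != v by apply/eqP => E; move: lt; rewrite E ltnn.
  case: (classic (anc pf u v)) => [auv|nauv]; last first.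
    have nvu : ~ anc pf v u by move=> /ancO; rewrite leqNgt lt.
    exists 0 => //; rewrite /L /Rr /=.
    by case: (F4 _ _ nauv nvu) => ->; rewrite ?orbT.
  exists (c u).+1; first by rewrite ltnS.
  rewrite /Rr /L /= eqxx.
  case: eqP => [_|cvu]; first by rewrite lt.
  case: pickP => [u0 /and3P[evu0 u0lt /eqP cu0]|_]; last by rewrite lt.
  case: (eqVneq u0 u) => [E|u0u].
    by move: evu0 neuv; rewrite E e_sym => ->.
  have eu0v : e u0 v by rewrite e_sym.
  have au0v := P1 e_sym inj cl eu0v u0lt.
  case: (anc_total auv au0v) => [a|a].
    by rewrite (ancS _ _ a) // eq_sym.
  have := P2 e_sym inj cl eu0v a auv u0u.
  by move/cp; rewrite cu0 eqxx.
exists om.+1; split => //.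
exists (fun v (i : 'I_om.+1) => ((L v i)%:R)%R : R), (fun v (i : 'I_om.+1) => ((Rr v i)%:R)%R : R).
split.
  move=> v i; rewrite ler_nat /L /Rr.
  case: eqP => _; first exact: F1.
  case: ifP => // _; apply: leq_trans (leN v).
  by case: pickP => // u0 /and3P[_ /ltnW ->].
move=> u v uv; split.
  by move=> euv i; rewrite !ler_nat; split; apply: side => //; rewrite e_sym.
move=> H; apply/negPn/negP => neuv.
have [i ilt sp] : exists2 i, i < om.+1 & (Rr u i < L v i) || (Rr v i < L u i).
  case: (ltngtP (ord u) (ord v)) => [lt|lt|/eqP]; last by rewrite (negbTE (ordne _ _ uv)).
    exact: sep.
  have [i ilt sp] := sep v u ltac:(by rewrite e_sym) lt.
  by exists i => //; rewrite orbC.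
have [h1 h2] := H (Ordinal ilt); move: h1 h2 sp; rewrite !ler_nat /= !ltnNge.
by move=> -> ->.
Qed.
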